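(* Let $(V,e)$ be a unital $\ast$-normed space. For $\varepsilon>0$ put $S_{\varepsilon}=V_{he}^{\ast}\cap\varepsilon\operatorname{ball}V^{\ast}$. Then for every $\varepsilon>1/\|e\|$ the unit ball of $V$ is equivalent to the absolute polar $S_{\varepsilon}^{\circ}$, i.e. there are reals $r,R>0$ with $rS_{\varepsilon}^{\circ}\subseteq\operatorname{ball}V\subseteq RS_{\varepsilon}^{\circ}$.
   Context: A $\ast$-normed space is a complex vector space $V$ with an involution $v\mapsto v^{\ast}$ and a norm with $\|v^{\ast}\|=\|v\|$ for all $v$. $V_h=\{v:v^{\ast}=v\}$. The dual $V^{\ast}$ carries the involution $\langle v,\varphi^{\ast}\rangle=\overline{\langle v^{\ast},\varphi\rangle}$; $V_h^{\ast}$ is the real space of bounded hermitian functionals ($\varphi^{\ast}=\varphi$). For a nonzero $e\in V_h$ put $V_{he}^{\ast}=\{y\in V_h^{\ast}:\langle e,y\rangle=1\}$ and $S=V_{he}^{\ast}\cap\operatorname{ball}V^{\ast}$. The element $e$ is a unit if $S\neq\varnothing$; then $(V,e)$ is called a unital $\ast$-normed space. For $A\subseteq V^{\ast}$, the absolute polar is $A^{\circ}=\{v\in V:|\langle v,a\rangle|\le 1\ \forall a\in A\}$. *)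

(* Defs.v *)
From HB Require Import structures.
From mathcomp Require Import all_boot all_order all_algebra.
From mathcomp Require Import all_classical all_reals all_analysis.
From mathcomp Require Import complex.
Set Implicit Arguments. Unset Strict Implicit. Unset Printing Implicit Defensive.
Import Order.TTheory GRing.Theory Num.Theory.
Import numFieldNormedType.Exports.
Local Open Scope classical_set_scope.
Local Open Scope ring_scope.
Local Open Scope complex_scope.

Section StarNormed.
Variables (R : realType) (V : normedModType R[i]).

Definition is_star_normed (star : V -> V) : Prop :=
  [/\ (forall v, star (star v) = v),
      (forall u v, star (u + v) = star u + star v),
      (forall (a : R[i]) v, star (a *: v) = (a ^*) *: star v) &
      (forall v, `|star v| = `|v|)].

Definition hermitian_elt (star : V -> V) (v : V) : Prop := star v = v.

Definition dual_elt (phi : V -> R[i]) : Prop :=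
  (forall (a : R[i]) u v, phi (a *: u + v) = a * phi u + phi v) /\
  exists M : R[i], forall v, `|phi v| <= M * `|v|.

Definition dual_star (star : V -> V) (phi : V -> R[i]) : V -> R[i] :=
  fun v => (phi (star v))^*.

Definition dual_herm (star : V -> V) : set (V -> R[i]) :=
  [set phi | dual_elt phi /\ dual_star star phi = phi].

Definition dual_herm_e (star : V -> V) (e : V) : set (V -> R[i]) :=
  [set phi | dual_herm star phi /\ phi e = 1].

Definition dual_ball (eps : R) : set (V -> R[i]) :=
  [set phi | dual_elt phi /\ forall v, `|phi v| <= eps%:C * `|v|].

Definition S_eps (star : V -> V) (e : V) (eps : R) : set (V -> R[i]) :=
  dual_herm_e star e `&` dual_ball eps.

Definition unital (star : V -> V) (e : V) : Prop :=
  [/\ is_star_normed star, hermitian_elt star e, e != 0 &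
      S_eps star e 1 !=set0].

Definition abs_polar (A : set (V -> R[i])) : set V :=
  [set v | forall a, A a -> `|a v| <= 1].

Definition ballV : set V := [set v | `|v| <= 1].

Definition rscale (r : R) (A : set V) : set V := [set r%:C *: v | v in A].

End StarNormed.

(* Main.v *)
Require Import Defs.
From HB Require Import structures.
From mathcomp Require Import all_boot all_order all_algebra.
From mathcomp Require Import all_classical all_reals all_analysis.
From mathcomp Require Import complex.
From mathcomp Require Import ring lra.
Import Order.TTheory GRing.Theory Num.Theory.
Import numFieldNormedType.Exports.
Local Open Scope classical_set_scope.
Local Open Scope ring_scope.
Local Open Scope complex_scope.

Section HBsec.
Variables (R : realType) (V : normedModType R[i]).

Definition nv (v : V) : R := complex.Re `|v|.

Lemma ge0_RC (x : R[i]) : 0 <= x -> x = (complex.Re x)%:C.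
Proof. by move=> /ger0_Im; case: x => a b /= ->. Qed.

Lemma normVE v : `|v| = (nv v)%:C.
Proof. exact: ge0_RC (normr_ge0 _). Qed.

Lemma nv_ge0 v : 0 <= nv v.
Proof. by rewrite -ler0c -normVE. Qed.

Lemma nvD u v : nv (u + v) <= nv u + nv v.
Proof. by have := ler_normD u v; rewrite !normVE -raddfD lecR. Qed.

Lemma normCr (a : R) : `|a%:C| = `|a|%:C.
Proof. by rewrite normc_def /= expr0n addr0 sqrtr_sqr. Qed.

Lemma nvZ (a : R) v : nv (a%:C *: v) = `|a| * nv v.
Proof. by rewrite /nv normrZ normCr normVE -rmorphM. Qed.

Lemma nvN v : nv (- v) = nv v.
Proof. by rewrite /nv normrN. Qed.

Variable x0 : V.

Definition good (G : set (V * R)) :=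
  [/\ G (x0, nv x0),
      (forall x a b, G (x, a) -> G (x, b) -> a = b),
      (forall x y a b t, G (x, a) -> G (y, b) -> G (t%:C *: x + y, t * a + b)) &
      (forall x a, G (x, a) -> a <= nv x)].

Lemma good0 G : good G -> G (0, 0).
Proof.
case=> G0 _ Gl _; have := Gl _ _ _ _ (-1) G0 G0.
by rewrite rmorphN1 scaleN1r addNr mulN1r addNr.
Qed.

Arguments good0 {G}.

Lemma good_scale G x a t : good G -> G (x, a) -> G (t%:C *: x, t * a).
Proof.
move=> gG Ga; case: (gG) => _ _ Gl _; have := Gl _ _ _ _ t Ga (good0 gG).
by rewrite addr0 addr0.
Qed.

Arguments good_scale {G x a} t.

Lemma good_add G x y a b : good G -> G (x, a) -> G (y, b) -> G (x + y, a + b).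
Proof.
move=> [_ _ Gl _] Ga Gb; have := Gl _ _ _ _ 1 Ga Gb.
by rewrite rmorph1 scale1r mul1r.
Qed.

Arguments good_add {G x y a b}.

Lemma good_ext A z : good A -> ~ (exists a, A (z, a)) ->
  exists B, good B /\ A `<` B.
Proof.
move=> gA nz; case: (gA) => A0 Af Al Ab.
pose S := [set y | exists x a, A (x, a) /\ y = a - nv (x - z)].
have S0 : S (0 - nv (0 - z)) by exists 0, 0; split => //; exact: good0.
have ub : forall y b, A (y, b) -> ubound S (nv (y + z) - b).
  move=> y b Ayb _ [x [a [Axa ->]]].
  have h1 := Ab _ _ (good_add gA Axa Ayb).
  have h2 : nv (x + y) <= nv (x - z) + nv (y + z).
    by have := nvD (x - z) (y + z); rewrite addrACA addNr addr0.
  lra.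
pose c := sup S.
have c_ub : forall y b, A (y, b) -> c <= nv (y + z) - b.
  by move=> y b Ayb; apply: ge_sup; [exists (0 - nv (0 - z)) | exact: ub].
have c_lb : forall x a, A (x, a) -> a - nv (x - z) <= c.
  move=> x a Axa; apply: ub_le_sup; last by exists x, a.
  by exists (nv (0 + z) - 0); apply: ub; exact: good0.
pose B := [set q | exists x a t, A (x, a) /\ q = (x + t%:C *: z, a + t * c)].
have AB : A `<=` B.
  by case=> x a Axa; exists x, a, 0; rewrite rmorph0 scale0r mul0r !addr0.
exists B; split; last first.
  split => // BA; apply: nz; exists c.
  apply: BA; exists 0, 0, 1; split; first exact: good0.
  by rewrite rmorph1 scale1r mul1r !add0r.
split.
- exact: AB.
- move=> w al be [x [a [t [Axa [-> ->]]]]] [x' [a' [t' [Axa' [Hw ->]]]]].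
  have hx : x = x' + (t' - t)%:C *: z.
    by rewrite rmorphB scalerBl addrA -Hw addrK.
  have tt : t = t'.
    apply/eqP; apply/negPn/negP => ntt; apply: nz.
    have hA := good_scale ((t' - t)^-1) gA
      (Al _ _ _ _ (-1) Axa' Axa).
    exists ((t' - t)^-1 * (-1 * a' + a)).
    suff <- : ((t' - t)^-1)%:C *: ((-1)%:C *: x' + x) = z by [].
    rewrite hx rmorphN1 scaleN1r addrA addNr add0r scalerA -rmorphM mulVf.
      by rewrite rmorph1 scale1r.
    by rewrite subr_eq0 eq_sym.
  subst t'; move: hx; rewrite subrr rmorph0 scale0r addr0 => hx; subst x'.
  by rewrite (Af _ _ _ Axa Axa').
- move=> w1 w2 al1 al2 s [x [a [t [Axa [-> ->]]]]] [y [b [u [Ayb [-> ->]]]]].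
  exists (s%:C *: x + y), (s * a + b), (s * t + u); split; first exact: Al.
  congr (_, _); last by ring.
  by rewrite !scalerDr scalerA -rmorphM rmorphD scalerDl addrACA.
- move=> w al [x [a [t [Axa [-> ->]]]]].
  have [t0|t0|->] := ltgtP t 0; last by rewrite ?rmorph0 scale0r mul0r !addr0; exact: Ab.
  + pose s := - t; have s0 : 0 < s by rewrite /s oppr_gt0.
    have h := c_lb _ _ (good_scale (s^-1) gA Axa).
    have -> : x + t%:C *: z = s%:C *: (s^-1%:C *: x - z).
      rewrite scalerBr scalerA -rmorphM mulfV ?gt_eqF // rmorph1 scale1r.
      by rewrite /s rmorphN scaleNr opprK.
    rewrite nvZ gtr0_norm //.
    have := ler_wpM2l (ltW s0) h.
    rewrite mulrBr mulrA mulfV ?gt_eqF // mul1r /s; lra.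
  + have h := c_ub _ _ (good_scale (t^-1) gA Axa).
    have -> : x + t%:C *: z = t%:C *: (t^-1%:C *: x + z).
      by rewrite scalerDr scalerA -rmorphM mulfV ?gt_eqF // rmorph1 scale1r.
    rewrite nvZ gtr0_norm //.
    have := ler_wpM2l (ltW t0) h.
    rewrite mulrBr mulrA mulfV ?gt_eqF // mul1r; lra.
Qed.


Lemma good_line : x0 != 0 ->
  good [set q | exists t : R, q = (t%:C *: x0, t * nv x0)].
Proof.
move=> x00; split.
- by exists 1; rewrite rmorph1 scale1r mul1r.
- move=> x a b [t [-> ->]] [s [hx ->]].
  have : (t - s)%:C *: x0 = 0 by rewrite rmorphB scalerBl hx subrr.
  move/eqP; rewrite scaler_eq0 (negbTE x00) orbF => /eqP.
  by move=> /(congr1 (@complex.Re R)) /= /eqP; rewrite subr_eq0 => /eqP ->.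
- move=> x y a b u [t [-> ->]] [s [-> ->]]; exists (u * t + s).
  by rewrite scalerA -rmorphM -scalerDl -rmorphD mulrA mulrDl.
- move=> x a [t [-> ->]]; rewrite nvZ.
  by apply: ler_wpM2r; [exact: nv_ge0 | exact: ler_norm].
Qed.

Lemma HB : x0 != 0 -> exists f : V -> R,
  [/\ (forall u v, f (u + v) = f u + f v),
      (forall (t : R) v, f (t%:C *: v) = t * f v),
      f x0 = nv x0 & forall v, f v <= nv v].
Proof.
move=> x00.
pose P := [set G : set (V * R) | G = set0 \/ good G].
have [A [PA Amax]] : exists A, P A /\ forall B, A `<` B -> ~ P B.
  apply: Zorn_bigcup => F FP Ftot.
  have [U0|/eqP/set0P [q [X FX Xq]]] := pselect (\bigcup_(X in F) X = set0); first by left.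
  have gY : forall Y, F Y -> forall r, Y r -> good Y.
    move=> Y FY r Yr; case: (FP _ FY) => // Y0.
    by move: Yr; rewrite Y0.
  have gX := gY _ FX _ Xq.
  right; split.
  - by exists X => //; case: gX.
  - move=> x a b [Y1 FY1 h1] [Y2 FY2 h2].
    case: (Ftot _ _ FY1 FY2) => sub.
    + by case: (gY _ FY2 _ h2) => _ f _ _; apply: f h2; apply: sub.
    + by case: (gY _ FY1 _ h1) => _ f _ _; apply: f h1 _; apply: sub.
  - move=> x y a b t [Y1 FY1 h1] [Y2 FY2 h2].
    case: (Ftot _ _ FY1 FY2) => sub.
    + exists Y2 => //; case: (gY _ FY2 _ h2) => _ _ l _; apply: l h2.
      exact: sub.
    + exists Y1 => //; case: (gY _ FY1 _ h1) => _ _ l _; apply: l h1 _.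
      exact: sub.
  - move=> x a [Y FY h]; case: (gY _ FY _ h) => _ _ _ b; exact: b.
have gA : good A.
  case: PA => // A0; exfalso.
  apply: (Amax [set q | exists t : R, q = (t%:C *: x0, t * nv x0)]).
    rewrite A0; split => // sub.
    have := sub (x0, nv x0); apply.
    by exists 1; rewrite rmorph1 scale1r mul1r.
  by right; exact: good_line.
have tot : forall z, exists a, A (z, a).
  move=> z; apply: contrapT => nz.
  have [B [gB AB]] := good_ext _ _ gA nz.
  by apply: (Amax B AB); right.
have [f Hf] := choice tot.
case: (gA) => A0 Af Al Ab.
exists f; split.
- move=> u v; exact: Af (Hf (u + v)) (good_add gA (Hf u) (Hf v)).
- move=> t v; exact: Af (Hf _) (good_scale t gA (Hf v)).
- exact: Af (Hf x0) A0.
- move=> v; exact: Ab (Hf v).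
Qed.

End HBsec.
Arguments HB {R V x0}.
Arguments nv {R V}.
Arguments normVE {R V}.
Arguments nv_ge0 {R V}.
Arguments nvD {R V}.
Arguments nvZ {R V}.
Arguments nvN {R V}.
Arguments normCr {R}.
Arguments ge0_RC {R}.

Section Herm.
Variables (R : realType) (V : normedModType R[i]) (star : V -> V).
Hypothesis Hs : is_star_normed star.

Lemma conjE (x : R[i]) : Num.conj x = conjc x.
Proof. by []. Qed.

Lemma starK v : star (star v) = v. Proof. by case: Hs. Qed.
Lemma starD u v : star (u + v) = star u + star v. Proof. by case: Hs. Qed.
Lemma starZ (a : R[i]) v : star (a *: v) = a^* *: star v. Proof. by case: Hs. Qed.
Lemma starZr (a : R) v : star (a%:C *: v) = a%:C *: star v.
Proof. by rewrite starZ conjE conjc_real. Qed.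
Lemma starN v : star (- v) = - star v.
Proof. by rewrite -scaleN1r -(rmorphN1 (real_complex R)) starZr rmorphN1 scaleN1r. Qed.
Lemma nv_star v : nv (star v) = nv v.
Proof. by case: Hs => _ _ _ h; rewrite /nv h. Qed.

Lemma conj_i : ('i : R[i])^* = - 'i.
Proof. by apply/eqP; rewrite eq_complex /= oppr0 !eqxx. Qed.

Lemma ii (v : V) : 'i *: ('i *: v) = - v.
Proof. by rewrite scalerA -expr2 sqr_i scaleN1r. Qed.

Lemma decompZ (a : R[i]) (u : V) :
  a *: u = (complex.Re a)%:C *: u + (complex.Im a)%:C *: ('i *: u).
Proof. by rewrite scalerA mulrC -scalerDl -complexE. Qed.

Lemma herm_norming h : star h = h -> exists G : V -> R[i],
  [/\ dual_elt G, dual_star star G = G, (forall v, `|G v| <= `|v|) & G h = `|h|].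
Proof.
move=> hh; have [->|h0] := eqVneq h 0.
  exists (fun _ => 0); split.
  - split; first by move=> *; rewrite mulr0 addr0.
    by exists 1 => v; rewrite normr0 mul1r normr_ge0.
  - by apply: funext => v; rewrite /dual_star conjc0.
  - by move=> v; rewrite normr0 normr_ge0.
  - by rewrite normr0.
have [f [fD fZ fh fle]] := HB h0.
have fN : forall v, f (- v) = - f v.
  by move=> v; rewrite -scaleN1r -(rmorphN1 (real_complex R)) fZ mulN1r.
pose g v := (f v + f (star v)) / 2.
have gD : forall u v, g (u + v) = g u + g v.
  by move=> u v; rewrite /g starD !fD; lra.
have gZ : forall (t : R) v, g (t%:C *: v) = t * g v.
  by move=> t v; rewrite /g starZr !fZ -mulrDr mulrA.
have gN : forall v, g (- v) = - g v.
  by move=> v; rewrite /g starN !fN; lra.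
have g_star : forall v, g (star v) = g v.
  by move=> v; rewrite /g starK addrC.
have g_le : forall v, g v <= nv v.
  move=> v; have := fle v; have := fle (star v); rewrite nv_star /g; lra.
pose G v := Complex (g v) (- g ('i *: v)).
have GL : forall (a : R[i]) u v, G (a *: u + v) = a * G u + G v.
  move=> a u v; rewrite /G.
  have -> : 'i *: (a *: u + v) =
     (complex.Re a)%:C *: ('i *: u) - (complex.Im a)%:C *: u + 'i *: v.
    rewrite scalerDr (decompZ a u) scalerDr !scalerA ![('i * _)]mulrC.
    by rewrite -!scalerA ii scalerN.
  rewrite !gD decompZ gD !gZ gN !gZ.
  case: a => ar ai /=; simpc.
  by congr Complex; ring.
have GZ : forall (a : R[i]) u, G (a *: u) = a * G u.
  move=> a u; have := GL a u 0; rewrite addr0 => ->.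
  suff -> : G 0 = 0 by rewrite addr0.
  have := GL 1 0 0; rewrite scale1r addr0 mul1r => h00.
  by apply: (addIr (G 0)); rewrite add0r -h00.
have Gb : forall v, `|G v| <= `|v|.
  move=> v; have [->|z0] := eqVneq (G v) 0; first by rewrite normr0 normr_ge0.
  set z := G v in z0 *.
  pose w := z^* / `|z|.
  have nz : `|z| != 0 by rewrite normr_eq0.
  have wz : w * z = `|z|.
    by rewrite /w mulrC mulrA -sqr_normc expr2 mulfK.
  have nw : `|w| = 1.
    by rewrite /w normrM normcJ normfV normr_id mulfV.
  have e1 : g (w *: v) = complex.Re `|z|.
    by have := GZ w v; rewrite wz => /(congr1 (@complex.Re R)).
  have e2 : nv (w *: v) = nv v by rewrite /nv normrZ nw mul1r.
  rewrite (ge0_RC `|z| (normr_ge0 _)) normVE lecR.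
  by have := g_le (w *: v); rewrite e1 e2.
exists G; split.
- split; first exact: GL.
  by exists 1 => v; rewrite mul1r.
- apply: funext => v; rewrite /dual_star /G g_star.
  rewrite -[g ('i *: star v)]g_star starZ starK !conjE conj_i scaleNr gN opprK.
  by simpc.
- exact: Gb.
- rewrite /G normVE -fh /g hh.
  rewrite starZ hh conjE conj_i scaleNr fN addrN mul0r oppr0.
  by congr Complex; lra.
Qed.

End Herm.
Arguments herm_norming {R V star}.
Arguments starK {R V star}.
Arguments starD {R V star}.
Arguments starZ {R V star}.
Arguments starZr {R V star}.
Arguments starN {R V star}.
Arguments nv_star {R V star}.
Arguments conjE {R}.
Arguments conj_i {R}.

Section Main.
Variables (R : realType) (V : normedModType R[i]) (star : V -> V) (e : V) (eps : R).

Lemma dual0 (p : V -> R[i]) : dual_elt p -> p 0 = 0.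
Proof.
case=> L _; have := L 1 0 0; rewrite scale1r addr0 mul1r => h.
by apply: (addIr (p 0)); rewrite add0r -h.
Qed.

Lemma dualZ (p : V -> R[i]) a u : dual_elt p -> p (a *: u) = a * p u.
Proof. by move=> Dp; case: (Dp) => L _; rewrite -[a *: u]addr0 L dual0 // addr0. Qed.

Lemma dualD (p : V -> R[i]) u v : dual_elt p -> p (u + v) = p u + p v.
Proof. by case=> L _; rewrite -[u]scale1r L mul1r scale1r. Qed.

Lemma dualN (p : V -> R[i]) u : dual_elt p -> p (- u) = - p u.
Proof. by move=> Dp; rewrite -scaleN1r dualZ // mulN1r. Qed.

Lemma herm_at (p : V -> R[i]) v : dual_star star p = p -> (p (star v))^* = p v.
Proof. by move=> H; exact: (congr1 (fun f => f v) H). Qed.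

Lemma conj_fixed (x : R[i]) : x^* = x -> x = (complex.Re x)%:C.
Proof.
case: x => a b /= [] h.
by apply/eqP; rewrite eq_complex /= eqxx /=; apply/eqP; lra.
Qed.

Lemma conj_comb (c d : R) (x y : R[i]) :
  (c%:C * x + d%:C * y)^* = c%:C * x^* + d%:C * y^*.
Proof.
case: x => a b; case: y => a' b'; rewrite -!complexr0; simpc.
by congr Complex; ring.
Qed.

Lemma S_comb (r1 r2 : V -> R[i]) (c1 c2 : R) :
  dual_elt r1 -> dual_elt r2 -> dual_star star r1 = r1 -> dual_star star r2 = r2 ->
  (forall v, `|r1 v| <= `|v|) -> (forall v, `|r2 v| <= `|v|) ->
  c1%:C * r1 e + c2%:C * r2 e = 1 -> `|c1| + `|c2| <= eps ->
  S_eps star e eps (fun v => c1%:C * r1 v + c2%:C * r2 v).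
Proof.
move=> D1 D2 H1 H2 B1 B2 He Hc.
have Hb : forall v, `|c1%:C * r1 v + c2%:C * r2 v| <= (`|c1| + `|c2|)%:C * `|v|.
  move=> v; rewrite rmorphD mulrDl; apply: le_trans (ler_normD _ _) _.
  by apply: lerD; rewrite normrM normCr; apply: ler_wpM2l; rewrite ?ler0c.
have DE : dual_elt (fun v => c1%:C * r1 v + c2%:C * r2 v).
  split; last by exists (`|c1| + `|c2|)%:C.
  move=> a u v; case: D1 => L1 _; case: D2 => L2 _.
  by rewrite L1 L2; ring.
split; [split; [split|] | split] => //.
  apply: funext => v; rewrite /dual_star conj_comb.
  by rewrite !conjE (herm_at _ _ H1) (herm_at _ _ H2).
move=> v; apply: le_trans (Hb v) _; apply: ler_wpM2r => //.
by rewrite lecR.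
Qed.

End Main.
Arguments dual0 {R V p}.
Arguments dualZ {R V p}.
Arguments dualD {R V p}.
Arguments dualN {R V p}.
Arguments herm_at {R V star p}.
Arguments conj_fixed {R}.
Arguments S_comb {R V star e eps r1 r2}.

Theorem theorem4p3 (R : realType) (V : normedModType R[i])
    (star : V -> V) (e : V) (eps : R) :
  unital star e ->
  1 / `|e| < eps%:C ->
  exists r Rr : R, [/\ 0 < r, 0 < Rr,
    rscale r (abs_polar (S_eps star e eps)) `<=` @ballV R V &
    @ballV R V `<=` rscale Rr (abs_polar (S_eps star e eps))].
Proof.
move=> [Hs He e0 _] heps.
set n := nv e.
have n0 : 0 < n.
  rewrite lt_def nv_ge0 andbT; apply: contra e0 => /eqP n0.
  by rewrite -normr_eq0 normVE -/n n0.
have ie : n^-1 < eps.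
  by move: heps; rewrite normVE div1r -(fmorphV (real_complex R)) ltcR.
have eps0 : 0 < eps by apply: lt_trans ie; rewrite invr_gt0.
have [re0 [De Hre Be ree]] := herm_norming Hs e He.
pose t := (eps - n^-1) / 2.
have t0 : 0 < t by rewrite /t; lra.
pose K := (2 + t * n) / t.
have K0 : 0 < K by rewrite /K divr_gt0 //; nra.
have claim : forall h, star h = h -> abs_polar (S_eps star e eps) h -> nv h <= K.
  move=> h hh Ph.
  have [rh [Dh Hh Bh rhh]] := herm_norming Hs h hh.
  set re := complex.Re (rh e).
  have reE : rh e = re%:C.
    by apply: conj_fixed; have := herm_at e Hh; rewrite He ?conjE.
  have re_le : `|re| <= n.
    by have := Bh e; rewrite reE normCr normVE lecR.
  have tdef : 2 * t = eps - n^-1.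
    by rewrite /t mulrC divfK // pnatr_eq0.
  have S1 : S_eps star e eps (fun v => n^-1%:C * re0 v + 0%:C * re0 v).
    apply: S_comb => //.
    - rewrite ree normVE -/n -!rmorphM -rmorphD mulVf ?gt_eqF // mul0r addr0.
      by rewrite rmorph1.
    - rewrite normr0 addr0 gtr0_norm ?invr_gt0 //; exact: ltW.
  have b1 : `|1 - t * re| <= 1 + t * n.
    apply: le_trans (ler_normB _ _) _; rewrite normr1 normrM (gtr0_norm t0).
    by apply: lerD => //; rewrite ler_pM2l.
  pose c1 := (1 - t * re) / n.
  have S2 : S_eps star e eps (fun v => c1%:C * re0 v + t%:C * rh v).
    apply: S_comb => //.
    - rewrite ree normVE -/n reE -!rmorphM -rmorphD /c1 divfK ?gt_eqF //.
      by rewrite subrK rmorph1.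
    - have hc : `|c1| <= n^-1 + t.
        rewrite /c1 normrM [`|n^-1|]ger0_norm; last by rewrite invr_ge0 ltW.
        rewrite -[n^-1 + t](_ : (1 + t * n) * n^-1 = _); last first.
          by rewrite mulrDl mul1r mulfK ?gt_eqF.
        by rewrite ler_pM2r ?invr_gt0.
      rewrite (gtr0_norm t0); lra.
  have P1 := Ph _ S1; have P2 := Ph _ S2; rewrite /= rhh normVE in P1 P2.
  have E : (t * nv h)%:C = (c1%:C * re0 h + t%:C * (nv h)%:C)
       - (1 - t * re)%:C * (n^-1%:C * re0 h + 0%:C * re0 h).
    by rewrite /c1 rmorph0 mul0r addr0 !rmorphM; ring.
  have : (t * nv h)%:C <= 1 + `|1 - t * re|%:C.
    have nX : `|(t * nv h)%:C| = (t * nv h)%:C.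
      by rewrite ger0_norm // ler0c mulr_ge0 ?nv_ge0 // ltW.
    rewrite -nX E.
    apply: le_trans (ler_normB _ _) _; apply: lerD => //.
    rewrite normrM normCr -[X in _ <= X]mulr1; apply: ler_wpM2l => //.
    by rewrite ler0c.
  rewrite -(rmorph1 (real_complex R)) -rmorphD lecR => H.
  by rewrite /K ler_pdivlMr // mulrC; lra.
have ni : `|'i : R[i]| = 1.
  by rewrite normc_def /= expr0n add0r expr1n sqrtr1.
have claim2 : forall w, abs_polar (S_eps star e eps) w -> nv w <= 2 * K.
  move=> w Pw.
  have Pst : forall p, S_eps star e eps p -> `|p (star w)| <= 1.
    move=> p Sp; have [[[Dp Hp] _] _] := Sp.
    rewrite -(herm_at (star w) Hp) (starK Hs) ?conjE normcJ; exact: Pw p Sp.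
  have two : (2^-1 * (1 + 1) : R[i]) = 1 by rewrite -mulr2n mulVf // pnatr_eq0.
  have i2 : (0 : R[i]) <= 2^-1 by rewrite invr_ge0 ler0n.
  have n2 : `|2^-1 : R[i]| = 2^-1 by rewrite ger0_norm.
  pose h := 2^-1 *: (w + star w).
  pose k := 2^-1 *: ('i *: (star w - w)).
  have Ph : abs_polar (S_eps star e eps) h.
    move=> p Sp; have [[[Dp _] _] _] := Sp.
    rewrite /h dualZ // dualD // normrM n2 -[X in _ <= X]two.
    apply: ler_pM; [exact: i2 | exact: normr_ge0 | exact: lexx |].
    apply: le_trans (ler_normD _ _) _; apply: lerD; [exact: Pw | exact: Pst].
  have Pk : abs_polar (S_eps star e eps) k.
    move=> p Sp; have [[[Dp _] _] _] := Sp.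
    rewrite /k dualZ // dualZ // dualD // dualN // !normrM n2 ni mul1r -[X in _ <= X]two.
    apply: ler_pM; [exact: i2 | exact: normr_ge0 | exact: lexx |].
    apply: le_trans (ler_normB _ _) _; apply: lerD; [exact: Pst | exact: Pw].
  have hh : star h = h.
    rewrite /h (starZ Hs) (starD Hs) (starK Hs) conjE conjc_inv conjc_nat.
    by rewrite addrC.
  have kk : star k = k.
    rewrite /k (starZ Hs) (starZ Hs) (starD Hs) (starN Hs) (starK Hs) !conjE.
    by rewrite conjc_inv conjc_nat conj_i scaleNr -scalerN opprB.
  have wE : w = h + 'i *: k.
    rewrite /h /k.
    have -> : 'i *: (2^-1 *: ('i *: (star w - w))) = 2^-1 *: (w - star w).
      by rewrite scalerA mulrC -scalerA ii opprB.
    rewrite -scalerDr addrACA subrr addr0 -mulr2n -[w *+ 2]scaler_nat scalerA.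
    by rewrite mulVf ?pnatr_eq0 // scale1r.
  have nik : nv ('i *: k) = nv k by rewrite /nv normrZ ni mul1r.
  rewrite {1}wE; apply: le_trans (nvD _ _) _; rewrite nik.
  have := claim h hh Ph; have := claim k kk Pk; lra.
exists (2 * K)^-1, eps; split.
- by rewrite invr_gt0 mulr_gt0.
- exact: eps0.
- move=> _ [w Pw <-]; rewrite /ballV /= normrZ normCr normVE -rmorphM.
  rewrite -(rmorph1 (real_complex R)) lecR.
  have K2 : 0 < 2 * K by rewrite mulr_gt0.
  rewrite gtr0_norm; last by rewrite invr_gt0.
  rewrite mulrC ler_pdivrMr // mul1r.
  exact: claim2.
- move=> v Bv; exists ((eps^-1)%:C *: v).
  + move=> p [[_ _] [Dp bp]]; rewrite dualZ // normrM normCr.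
    rewrite [`|eps^-1|]ger0_norm; last by rewrite invr_ge0 ltW.
    apply: (le_trans (y := eps^-1%:C * (eps%:C * `|v|))).
      by apply: ler_wpM2l; [rewrite ler0c invr_ge0 ltW | exact: bp].
    rewrite mulrA -rmorphM mulVf ?gt_eqF // rmorph1 mul1r; exact: Bv.
  + by rewrite scalerA -rmorphM mulfV ?gt_eqF // rmorph1 scale1r.
Qed.
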